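(* Let $E=(E_-,\infty)$ with $E_-\in\{-\infty\}\cup\mathbb R$. Let $u,\tilde u:E\to(0,\infty)$ be two global $C^2$ solutions of $$0=\tfrac12b^2u''+\tilde au'+\eta u-u^2-d\frac{(u')^2}{u}$$ such that $\tilde u(y)/u(y)\to1$ as $y\to\partial E$ (i.e. as $y\downarrow E_-$ and as $y\to\infty$). Then $u=\tilde u$.
   Context: $r,\lambda,\sigma,a,b,\rho,\delta:E\to\mathbb R$ are locally Lipschitz with $\sigma>0$, $b(y)\neq0$, $\rho(y)\in[-1,1]$; $R\in(0,\infty)\setminus\{1\}$. Define $\eta=\frac1R\big(\delta-(1-R)(r+\frac{\lambda^2}{2R})\big)$, $\tilde a=a+\frac{1-R}{R}\rho\lambda b$, $d=\frac12b^2((1-\rho^2)R+\rho^2+1)$. *)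

(* Defs.v *)
From Stdlib Require Import Reals.
From Coquelicot Require Import Coquelicot.
Open Scope R_scope.

Definition inE (Em : Rbar) (y : R) : Prop := Rbar_lt Em (Finite y).

Definition loc_lipschitz_on (Em : Rbar) (f : R -> R) : Prop :=
  forall y, inE Em y ->
    exists eps : R, exists L : R, 0 < eps /\
      forall x z, inE Em x -> inE Em z -> Rabs (x - y) < eps -> Rabs (z - y) < eps ->
        Rabs (f x - f z) <= L * Rabs (x - z).

Definition eta_c (R0 : R) (r lam delta : R -> R) (y : R) : R :=
  / R0 * (delta y - (1 - R0) * (r y + (lam y) ^ 2 / (2 * R0))).
Definition atilde (R0 : R) (a rho lam b : R -> R) (y : R) : R :=
  a y + (1 - R0) / R0 * rho y * lam y * b y.
Definition d_c (R0 : R) (b rho : R -> R) (y : R) : R :=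
  / 2 * (b y) ^ 2 * ((1 - (rho y) ^ 2) * R0 + (rho y) ^ 2 + 1).

Definition global_C2_solution (Em : Rbar) (R0 : R) (r lam a b rho delta : R -> R)
    (u : R -> R) : Prop :=
  (forall y, inE Em y -> 0 < u y) /\
  exists u1 u2 : R -> R,
    forall y, inE Em y ->
      is_derive u y (u1 y) /\ is_derive u1 y (u2 y) /\ continuous u2 y /\
      0 = / 2 * (b y) ^ 2 * u2 y + atilde R0 a rho lam b y * u1 y
          + eta_c R0 r lam delta y * u y - (u y) ^ 2
          - d_c R0 b rho y * (u1 y) ^ 2 / u y.

Definition lower_boundary_filter (Em : Rbar) : (R -> Prop) -> Prop :=
  match Em with
  | Finite e => at_right e
  | m_infty => Rbar_locally m_infty
  | p_infty => Rbar_locally p_infty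
  end.

(* Main.v *)
Require Import Defs.
From Stdlib Require Import Reals Lra.
From Coquelicot Require Import Coquelicot.
Open Scope R_scope.

Lemma helper_pos f x l : is_derive f x l -> 0 < l ->
  exists d, 0 < d /\ forall h, 0 < h < d -> f x < f (x + h).
Proof.
  intros H Hl. apply is_derive_Reals in H.
  destruct (H l Hl) as [d Hd]. exists d. split; [apply cond_pos|].
  intros h Hh. assert (Hq := Hd h ltac:(lra) ltac:(rewrite Rabs_pos_eq; lra)).
  apply Rabs_def2 in Hq.
  set (q := (f (x + h) - f x) / h) in *.
  assert (E : f (x+h) - f x = q * h) by (unfold q; field; lra).
  assert (0 < q * h) by (apply Rmult_lt_0_compat; lra). lra.
Qed.

Lemma helper_neg f x l : is_derive f x l -> l < 0 ->
  exists d, 0 < d /\ forall h, -d < h < 0 -> f x < f (x + h).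
Proof.
  intros H Hl. apply is_derive_Reals in H.
  destruct (H (-l) ltac:(lra)) as [d Hd]. exists d. split; [apply cond_pos|].
  intros h Hh. assert (Hq := Hd h ltac:(lra) ltac:(rewrite Rabs_left; lra)).
  apply Rabs_def2 in Hq.
  set (q := (f (x + h) - f x) / h) in *.
  assert (E : f (x+h) - f x = q * h) by (unfold q; field; lra).
  assert (0 < q * h) by (nra). 
  lra.
Qed.

Lemma inE_mono Em x z : inE Em x -> x <= z -> inE Em z.
Proof. destruct Em; simpl; auto; intros; lra. Qed.

Lemma lower_pt Em P : Em <> p_infty -> lower_boundary_filter Em P ->
  forall y, inE Em y -> exists a, inE Em a /\ a < y /\ P a.
Proof.
  intros HE HP y Hy. destruct Em as [e| |]; simpl in *.
  - destruct HP as [eps Heps].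
    set (a := e + Rmin eps (y - e) / 2).
    assert (H1 := Rmin_l eps (y - e)). assert (H2 := Rmin_r eps (y - e)).
    assert (H3 : 0 < Rmin eps (y - e)) by (apply Rmin_glb_lt; [apply cond_pos|lra]).
    exists a. unfold a. split; [lra|split; [lra|]].
    apply Heps; [|lra].
    unfold ball; simpl; unfold AbsRing_ball, abs, minus, plus, opp; simpl.
    rewrite Rabs_pos_eq; lra.
  - congruence.
  - destruct HP as [M HM]. exists (Rmin M y - 1).
    assert (H1 := Rmin_l M y). assert (H2 := Rmin_r M y).
    split; [exact I|split; [lra|apply HM; lra]].
Qed.

Lemma upper_pt P : Rbar_locally p_infty P -> forall y, exists b, y < b /\ P b.
Proof.
  intros [M HM] y. exists (Rmax M y + 1).
  assert (H1 := Rmax_l M y). assert (H2 := Rmax_r M y). split; [lra|apply HM; lra].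
Qed.

Lemma lim_lt F (w : R -> R) c : filterlim w F (locally 1) -> 1 < c ->
  F (fun x => Rabs (w x - 1) < c - 1).
Proof.
  intros Hl Hc. assert (Hp : 0 < c - 1) by lra.
  exact (Hl (ball 1 (mkposreal _ Hp)) (locally_ball 1 (mkposreal _ Hp))).
Qed.

Lemma alg (B A H D u u1 u2 v v1 v2 : R) : B <> 0 -> 0 < u -> u < v -> v1*u - v*u1 = 0 ->
  0 = /2*B^2*u2 + A*u1 + H*u - u^2 - D*u1^2/u ->
  0 = /2*B^2*v2 + A*v1 + H*v - v^2 - D*v1^2/v -> 0 < v2*u - v*u2.
Proof.
  intros HB Hu Huv Hn Eu Ev.
  assert (Ev1 : v1 = v*u1/u) by (field_simplify; [|lra]; apply (Rmult_eq_reg_r u); [|lra]; field_simplify; lra).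
  rewrite Ev1 in Ev.
  assert (E : /2*B^2*(v2*u - v*u2) = v*u*(v-u)).
  { replace (/2*B^2*(v2*u-v*u2)) with (u*(/2*B^2*v2) - v*(/2*B^2*u2)) by ring.
    replace (/2*B^2*v2) with (-(A*(v*u1/u)) - H*v + v^2 + D*(v*u1/u)^2/v) by lra.
    replace (/2*B^2*u2) with (-(A*u1) - H*u + u^2 + D*u1^2/u) by lra.
    field. lra. }
  assert (HB2 : 0 < /2*B^2) by (assert (0 < B^2) by (apply pow2_gt_0; auto); lra).
  assert (0 < v*u*(v-u)) by (apply Rmult_lt_0_compat; [apply Rmult_lt_0_compat|]; lra).
  rewrite <- E in H0. nra.
Qed.

Definition sol (Em : Rbar) (B A H D u : R -> R) : Prop :=
  (forall y, inE Em y -> 0 < u y) /\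
  exists u1 u2 : R -> R,
    forall y, inE Em y ->
      is_derive u y (u1 y) /\ is_derive u1 y (u2 y) /\ continuous u2 y /\
      0 = / 2 * (B y) ^ 2 * u2 y + A y * u1 y + H y * u y - (u y) ^ 2
          - D y * (u1 y) ^ 2 / u y.

Lemma key Em B A H D u ut : Em <> p_infty -> (forall y, inE Em y -> B y <> 0) ->
  sol Em B A H D u -> sol Em B A H D ut ->
  filterlim (fun y => ut y / u y) (lower_boundary_filter Em) (locally 1) ->
  filterlim (fun y => ut y / u y) (Rbar_locally p_infty) (locally 1) ->
  forall y, inE Em y -> ut y <= u y.
Proof.
  intros HE HB [upos [u1 [u2 Hu]]] [utpos [ut1 [ut2 Hut]]] Hlo Hhi y Hy.
  apply Rnot_lt_le; intro Hlt.
  set (w := fun t => ut t / u t).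
  set (c := w y).
  assert (Hc : 1 < c).
  { unfold c, w. assert (0 < u y) by auto. apply (Rmult_lt_reg_r (u y)); auto.
    unfold Rdiv; rewrite Rmult_assoc, Rinv_l; lra. }
  destruct (lower_pt _ _ HE (lim_lt _ _ _ Hlo Hc) y Hy) as [a [Ha [Hay Hwa]]].
  destruct (upper_pt _ (lim_lt _ _ _ Hhi Hc) y) as [b [Hyb Hwb]].
  apply Rabs_def2 in Hwa. apply Rabs_def2 in Hwb. cbv beta in Hwa, Hwb.
  assert (HinE : forall t, a <= t -> inE Em t) by (intros; eapply inE_mono; eauto).
  set (W1 := fun t => (ut1 t * u t - ut t * u1 t) / u t ^ 2).
  assert (Hdw : forall t, a <= t -> is_derive w t (W1 t)).
  { intros t Ht. destruct (Hu t (HinE t Ht)) as [d1 _]. destruct (Hut t (HinE t Ht)) as [d2 _].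
    unfold w, W1. apply is_derive_div; auto.
    assert (0 < u t) by auto. lra. }
  assert (Hcont : forall t, a <= t -> continuity_pt w t).
  { intros t Ht. apply continuity_pt_filterlim. apply (ex_derive_continuous w t).
    exists (W1 t). auto. }
  destruct (continuity_ab_maj w a b ltac:(lra) (fun t Ht => Hcont t (proj1 Ht))) as [y0 [Hmax Hy0]].
  assert (Hwy0 : c <= w y0) by (apply Hmax; lra).
  assert (Hay0 : a < y0).
  { destruct Hy0 as [[?|E] _]; auto. rewrite <- E in Hwy0. unfold w in Hwy0. lra. }
  assert (Hy0b : y0 < b).
  { destruct Hy0 as [_ [?|E]]; auto. rewrite E in Hwy0. unfold w in Hwy0. lra. }
  assert (Hz : W1 y0 = 0).
  { destruct (Rtotal_order (W1 y0) 0) as [Hn|[Hz|Hp]]; auto.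
    - destruct (helper_neg _ _ _ (Hdw y0 ltac:(lra)) Hn) as [d [Hd Hd']].
      set (h := - (Rmin d (y0 - a) / 2)).
      assert (H1 := Rmin_l d (y0 - a)). assert (H2 := Rmin_r d (y0 - a)).
      assert (H3 : 0 < Rmin d (y0 - a)) by (apply Rmin_glb_lt; lra).
      assert (K1 := Hd' h ltac:(unfold h; lra)).
      assert (K2 := Hmax (y0 + h) ltac:(unfold h; lra)). lra.
    - destruct (helper_pos _ _ _ (Hdw y0 ltac:(lra)) Hp) as [d [Hd Hd']].
      set (h := Rmin d (b - y0) / 2).
      assert (H1 := Rmin_l d (b - y0)). assert (H2 := Rmin_r d (b - y0)).
      assert (H3 : 0 < Rmin d (b - y0)) by (apply Rmin_glb_lt; lra).
      assert (K1 := Hd' h ltac:(unfold h; lra)).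
      assert (K2 := Hmax (y0 + h) ltac:(unfold h; lra)). lra. }
  assert (Hu0 : 0 < u y0) by (apply upos; apply HinE; lra).
  assert (Hut0 : 0 < ut y0) by (apply utpos; apply HinE; lra).
  assert (Hn0 : ut1 y0 * u y0 - ut y0 * u1 y0 = 0).
  { replace (ut1 y0 * u y0 - ut y0 * u1 y0) with (W1 y0 * u y0 ^ 2) by (unfold W1; field; lra).
    rewrite Hz; ring. }
  destruct (Hu y0 (HinE y0 ltac:(lra))) as [du [du1 [_ Eu]]].
  destruct (Hut y0 (HinE y0 ltac:(lra))) as [dut [dut1 [_ Eut]]].
  assert (Huv : u y0 < ut y0).
  { assert (1 < w y0) by lra. unfold w in H0.
    apply (Rmult_lt_compat_r (u y0)) in H0; auto.
    unfold Rdiv in H0; rewrite Rmult_assoc, Rinv_l, Rmult_1_l, Rmult_1_r in H0; lra. }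
  assert (HX := alg (B y0) (A y0) (H y0) (D y0) (u y0) (u1 y0) (u2 y0) (ut y0) (ut1 y0) (ut2 y0)
     (HB y0 (HinE y0 ltac:(lra))) Hu0 Huv Hn0 Eu Eut).
  set (N' := ut2 y0 * u y0 + ut1 y0 * u1 y0 - (ut1 y0 * u1 y0 + ut y0 * u2 y0)).
  assert (HdN : is_derive (fun t => ut1 t * u t - ut t * u1 t) y0 N').
  { apply is_derive_Reals. apply is_derive_Reals in du. apply is_derive_Reals in du1.
    apply is_derive_Reals in dut. apply is_derive_Reals in dut1.
    apply (derivable_pt_lim_minus (fun t => ut1 t * u t) (fun t => ut t * u1 t)).
    - apply (derivable_pt_lim_mult ut1 u); auto.
    - apply (derivable_pt_lim_mult ut u1); auto. }
  assert (Hg : u y0 ^ 2 <> 0) by (apply pow_nonzero; lra).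
  assert (HdW1 := is_derive_div _ (fun t => u t ^ 2) y0 _ _ HdN (is_derive_pow u 2 y0 _ du) Hg).
  simpl in HdW1. rewrite Hn0 in HdW1.
  assert (HV : 0 < (N' * (u y0 * (u y0 * 1)) - 0 * ((1 + 1) * u1 y0 * (u y0 * 1))) / (u y0 * (u y0 * 1)) ^ 2).
  { replace ((N' * (u y0 * (u y0 * 1)) - 0 * ((1 + 1) * u1 y0 * (u y0 * 1))) / (u y0 * (u y0 * 1)) ^ 2)
      with (N' / (u y0 * u y0)) by (field; lra).
    apply Rdiv_lt_0_compat; [unfold N'; lra|nra]. }
  destruct (helper_pos _ _ _ HdW1 HV) as [d [Hd Hd']].
  change (fun t => (ut1 t * u t - ut t * u1 t) / u t ^ 2) with W1 in Hd'.
  set (t := Rmin d (b - y0) / 2).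
  assert (H1 := Rmin_l d (b - y0)). assert (H2 := Rmin_r d (b - y0)).
  assert (H3 : 0 < Rmin d (b - y0)) by (apply Rmin_glb_lt; lra).
  assert (Ht : 0 < t) by (unfold t; lra).
  assert (Hpos : forall s, y0 < s <= y0 + t -> 0 < W1 s).
  { intros s Hs. assert (K := Hd' (s - y0) ltac:(unfold t in *; lra)).
    replace (y0 + (s - y0)) with s in K by ring. change (W1 y0 < W1 s) in K. lra. }
  destruct (MVT_gen w y0 (y0 + t/2) W1) as [c1 [Hc1 E1]].
  { intros x Hx. apply Hdw. rewrite Rmin_left in Hx by (unfold t; lra). lra. }
  { intros x Hx. apply Hcont. rewrite Rmin_left in Hx by (unfold t; lra). lra. }
  destruct (MVT_gen w (y0 + t/2) (y0 + t) W1) as [c2 [Hc2 E2]].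
  { intros x Hx. apply Hdw. rewrite Rmin_left in Hx by (unfold t; lra). lra. }
  { intros x Hx. apply Hcont. rewrite Rmin_left in Hx by (unfold t; lra). lra. }
  rewrite Rmin_left, Rmax_right in Hc1 by (unfold t; lra).
  rewrite Rmin_left, Rmax_right in Hc2 by (unfold t; lra).
  assert (P1 : 0 <= W1 c1).
  { destruct Hc1 as [[?|<-] ?]; [|lra]. left; apply Hpos; unfold t in *; lra. }
  assert (P2 : 0 < W1 c2) by (apply Hpos; unfold t in *; lra).
  assert (Q1 : 0 <= W1 c1 * (y0 + t/2 - y0)) by (apply Rmult_le_pos; unfold t in *; lra).
  assert (Q2 : 0 < W1 c2 * (y0 + t - (y0 + t/2))) by (apply Rmult_lt_0_compat; unfold t in *; lra).
  assert (K := Hmax (y0 + t) ltac:(unfold t in *; lra)). lra.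
Qed.

Lemma inv_lim (F : (R -> Prop) -> Prop) {FF : Filter F} (u ut : R -> R) :
  F (fun y => 0 < u y /\ 0 < ut y) ->
  filterlim (fun y => ut y / u y) F (locally 1) ->
  filterlim (fun y => u y / ut y) F (locally 1).
Proof.
  intros Hp Hl.
  apply (filterlim_ext_loc (fun y => / (ut y / u y))).
  - revert Hp. apply filter_imp. intros y [H1 H2]. field. lra.
  - eapply filterlim_comp; [exact Hl|].
    assert (Hc := continuous_Rinv 1 R1_neq_R0). unfold continuous in Hc.
    rewrite Rinv_1 in Hc. exact Hc.
Qed.

Lemma lower_filter Em : Filter (lower_boundary_filter Em).
Proof. destruct Em; simpl; exact _. Qed.

Lemma lower_ev Em (P : R -> Prop) : Em <> p_infty -> (forall y, inE Em y -> P y) -> lower_boundary_filter Em P.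
Proof.
  intros HE H. destruct Em as [e| |]; simpl.
  - exists (mkposreal 1 Rlt_0_1). intros y _ Hy. apply H. exact Hy.
  - congruence.
  - exists 0. intros. apply H. exact I.
Qed.

Lemma upper_ev Em (P : R -> Prop) : Em <> p_infty -> (forall y, inE Em y -> P y) ->
  Rbar_locally p_infty P.
Proof.
  intros HE H. destruct Em as [e| |]; simpl.
  - exists e. intros. apply H. exact H0.
  - congruence.
  - exists 0. intros. apply H. exact I.
Qed.

Theorem theorem4p7
  (Em : Rbar) (HEm : Em <> p_infty)
  (r lam sigma a b rho delta : R -> R) (R0 : R)
  (Hr : loc_lipschitz_on Em r) (Hlam : loc_lipschitz_on Em lam)
  (Hsigma : loc_lipschitz_on Em sigma) (Ha : loc_lipschitz_on Em a)
  (Hb : loc_lipschitz_on Em b) (Hrho : loc_lipschitz_on Em rho)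
  (Hdelta : loc_lipschitz_on Em delta)
  (Hsigma_pos : forall y, inE Em y -> 0 < sigma y)
  (Hb_nz : forall y, inE Em y -> b y <> 0)
  (Hrho_rng : forall y, inE Em y -> -1 <= rho y <= 1)
  (HR0pos : 0 < R0) (HR0ne1 : R0 <> 1)
  (u ut : R -> R)
  (Hu : global_C2_solution Em R0 r lam a b rho delta u)
  (Hut : global_C2_solution Em R0 r lam a b rho delta ut)
  (Hlim_low : filterlim (fun y => ut y / u y) (lower_boundary_filter Em) (locally 1))
  (Hlim_high : filterlim (fun y => ut y / u y) (Rbar_locally p_infty) (locally 1)) :
  forall y, inE Em y -> u y = ut y.
Proof.
  intros y Hy.
  assert (S1 : sol Em b (atilde R0 a rho lam b) (eta_c R0 r lam delta) (d_c R0 b rho) u) by exact Hu.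
  assert (S2 : sol Em b (atilde R0 a rho lam b) (eta_c R0 r lam delta) (d_c R0 b rho) ut) by exact Hut.
  assert (Hpos : forall y, inE Em y -> 0 < u y /\ 0 < ut y)
    by (intros z Hz; split; [apply (proj1 Hu)|apply (proj1 Hut)]; auto).
  apply Rle_antisym.
  - apply (key Em b _ _ _ ut u HEm Hb_nz S2 S1); auto.
    + apply (@inv_lim _ (lower_filter Em)); auto. apply lower_ev; auto.
    + apply (@inv_lim (Rbar_locally p_infty) (@filter_filter _ _ (Rbar_locally_filter p_infty))); auto. apply (upper_ev Em); auto.
  - apply (key Em b _ _ _ u ut HEm Hb_nz S1 S2); auto.
Qed.
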